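(* For distinct $a,b\in H^2$ and $k\in\mathbb R$ let $S_k(a,b)=\{x\in H^2: d_H(x,a)^2-d_H(x,b)^2=k\}$. For $\mathsf x=(x_1,x_2)$, $\mathsf y=(y_1,y_2)$ in $H^2\times H^2$ with $x_i\ne y_i$ let $E_k(\mathsf x,\mathsf y)=S_k(x_1,y_1)\times S_k(y_2,x_2)$. Let $\mathsf x,\mathsf y,\mathsf z\in H^2\times H^2$ be such that $\mathsf y$ is between $\mathsf x$ and $\mathsf z$. If $E_k(\mathsf x,\mathsf y)\cap E_l(\mathsf y,\mathsf z)\neq\emptyset$ for some $k,l\in\mathbb R$, then $kl>0$.
   Context: For $x,y,z\in H^2$, let $l_1=S_0(x,y)$ and $l_2=S_0(y,z)$ be the equidistant lines; if $l_1,l_2$ are disjoint, the complement of $l_1\cup l_2$ has three components, two half-planes bounded by $l_1$ resp. $l_2$, and a slab bounded by $l_1\cup l_2$. We say $y$ is between $x$ and $z$ if $l_1$ and $l_2$ are disjoint and $y$ lies in the slab. For points of $H^2\times H^2$, $\mathsf y$ is between $\mathsf x$ and $\mathsf z$ if for each $i=1,2$ the $i$-th coordinate $y_i$ is between $x_i$ and $z_i$ in this sense. $d_H$ is the hyperbolic distance. *)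

(* Defs.v *)
From Stdlib Require Import Reals.
Open Scope R_scope.

(* The hyperbolic plane H^2, upper half-plane model: points (u,v) with v > 0. *)
Definition H2 : Type := { p : R * R | 0 < snd p }.

Definition arcosh (t : R) : R := ln (t + sqrt (t * t - 1)).

Definition dH (p q : H2) : R :=
  let '(u1, v1) := proj1_sig p in
  let '(u2, v2) := proj1_sig q in
  arcosh (1 + ((u1 - u2) ^ 2 + (v1 - v2) ^ 2) / (2 * v1 * v2)).

Definition S (k : R) (a b : H2) (x : H2) : Prop :=
  dH x a ^ 2 - dH x b ^ 2 = k.

(* Signed "side" function of the equidistant line S_0(a,b):
   its zero set is S_0(a,b), and the two (open) half-planes bounded by
   S_0(a,b) are where it is positive, resp. negative. *)
Definition side (a b : H2) (p : H2) : R := dH p a ^ 2 - dH p b ^ 2.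

(* y is between x and z in H^2: l1 = S_0(x,y), l2 = S_0(y,z) are disjoint and
   y lies in the slab bounded by l1 ∪ l2, i.e. the component of the complement
   of l1 ∪ l2 lying on the same side of l1 as l2 and on the same side of l2 as l1. *)
Definition between (x y z : H2) : Prop :=
  (forall p, ~ (S 0 x y p /\ S 0 y z p)) /\
  (forall q, S 0 y z q -> side x y q * side x y y > 0) /\
  (forall q, S 0 x y q -> side y z q * side y z y > 0).

Definition H2xH2 : Type := (H2 * H2)%type.

Definition betweenP (x y z : H2xH2) : Prop :=
  between (fst x) (fst y) (fst z) /\ between (snd x) (snd y) (snd z).

Definition E (k : R) (x y : H2xH2) (p : H2xH2) : Prop :=
  S k (fst x) (fst y) (fst p) /\ S k (snd y) (snd x) (snd p).

(* Main.v *)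
Require Import Defs.
From Stdlib Require Import Reals Lra Psatz.
Open Scope R_scope.

Definition cc (p q : H2) : R :=
  1 + ((fst (proj1_sig p) - fst (proj1_sig q)) ^ 2 + (snd (proj1_sig p) - snd (proj1_sig q)) ^ 2)
      / (2 * snd (proj1_sig p) * snd (proj1_sig q)).

Lemma dH_cc p q : dH p q = arcosh (cc p q).
Proof. destruct p as [[u1 v1] h1], q as [[u2 v2] h2]. reflexivity. Qed.

Lemma cc_ge1 p q : 1 <= cc p q.
Proof.
  destruct p as [[u1 v1] h1], q as [[u2 v2] h2]. unfold cc; simpl in *.
  assert (0 <= ((u1 - u2) ^ 2 + (v1 - v2) ^ 2) / (2 * v1 * v2)).
  { unfold Rdiv; apply Rmult_le_pos; [apply Rplus_le_le_0_compat; apply pow2_ge_0 | left; apply Rinv_0_lt_compat; nra]. }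
  lra.
Qed.

Lemma cc_refl p : cc p p = 1.
Proof. unfold cc. replace ((fst (proj1_sig p) - fst (proj1_sig p)) ^ 2 +
   (snd (proj1_sig p) - snd (proj1_sig p)) ^ 2) with 0 by ring. unfold Rdiv; ring. Qed.

Lemma arcosh_nonneg t : 1 <= t -> 0 <= arcosh t.
Proof.
  intro h. unfold arcosh. rewrite <- ln_1.
  pose proof (sqrt_pos (t*t-1)).
  destruct (Rle_lt_or_eq_dec 1 (t + sqrt (t*t-1))) as [h'|h']; [lra| |].
  - left; apply ln_increasing; lra.
  - rewrite <- h'; lra.
Qed.

Lemma arcosh_lt s t : 1 <= s -> s < t -> arcosh s < arcosh t.
Proof.
  intros h1 h2. unfold arcosh. pose proof (sqrt_pos (s*s-1)).
  apply ln_increasing; [lra|].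
  assert (sqrt (s*s-1) <= sqrt (t*t-1)) by (apply sqrt_le_1_alt; nra). lra.
Qed.

Lemma arcosh_1 : arcosh 1 = 0.
Proof. unfold arcosh. replace (1*1-1) with 0 by ring. rewrite sqrt_0, Rplus_0_r. apply ln_1. Qed.

Definition Qr (a b : H2) (u v : R) : R :=
  ((u - fst (proj1_sig a)) ^ 2 + (v - snd (proj1_sig a)) ^ 2) / snd (proj1_sig a)
  - ((u - fst (proj1_sig b)) ^ 2 + (v - snd (proj1_sig b)) ^ 2) / snd (proj1_sig b).

Definition Q a b (p : H2) := Qr a b (fst (proj1_sig p)) (snd (proj1_sig p)).

Lemma Q_cc a b p : cc p a - cc p b = Q a b p / (2 * snd (proj1_sig p)).
Proof.
  destruct p as [[u1 v1] h1], a as [[u2 v2] h2], b as [[u3 v3] h3].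
  unfold cc, Q, Qr; simpl in *. field. lra.
Qed.

Lemma side_cc a b p :
  (cc p a < cc p b -> side a b p < 0) /\ (cc p a = cc p b -> side a b p = 0) /\
  (cc p b < cc p a -> 0 < side a b p).
Proof.
  unfold side. rewrite !dH_cc. pose proof (cc_ge1 p a). pose proof (cc_ge1 p b).
  pose proof (arcosh_nonneg _ H). pose proof (arcosh_nonneg _ H0).
  split; [|split].
  - intro h. pose proof (arcosh_lt _ _ H h). nra.
  - intro h. rewrite h. ring.
  - intro h. pose proof (arcosh_lt _ _ H0 h). nra.
Qed.

Lemma side_Q a b p :
  (Q a b p < 0 -> side a b p < 0) /\ (Q a b p = 0 -> side a b p = 0) /\
  (0 < Q a b p -> 0 < side a b p).
Proof.
  pose proof (Q_cc a b p). pose proof (side_cc a b p).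
  destruct p as [[u v] hv]. simpl in *.
  assert (0 < 2 * v) by lra.
  destruct H0 as [A [B C]].
  split; [|split]; intro h.
  - apply A. assert (Q a b (exist _ (u,v) hv) / (2*v) < 0).
    { unfold Rdiv. apply Rmult_neg_pos; [lra| apply Rinv_0_lt_compat; lra]. } lra.
  - apply B. rewrite h in H. unfold Rdiv in H. rewrite Rmult_0_l in H. lra.
  - apply C. assert (0 < Q a b (exist _ (u,v) hv) / (2*v)).
    { unfold Rdiv. apply Rmult_lt_0_compat; [lra| apply Rinv_0_lt_compat; lra]. } lra.
Qed.

Lemma Q_side a b p :
  (side a b p < 0 -> Q a b p < 0) /\ (side a b p = 0 -> Q a b p = 0) /\
  (0 < side a b p -> 0 < Q a b p).
Proof.
  pose proof (side_Q a b p) as [A [B C]].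
  destruct (Rtotal_order (Q a b p) 0) as [h|[h|h]].
  - pose proof (A h). repeat split; intros; lra.
  - pose proof (B h). repeat split; intros; lra.
  - pose proof (C h). repeat split; intros; lra.
Qed.

Lemma side_self_l a b : side a b a = - dH a b ^ 2.
Proof. unfold side. rewrite (dH_cc a a), cc_refl, arcosh_1. ring. Qed.
Lemma side_self_r a b : side a b b = dH b a ^ 2.
Proof. unfold side. rewrite (dH_cc b b), cc_refl, arcosh_1. ring. Qed.

Lemma boundary x y z p : between x y z ->
  side x y p <= 0 -> side y z p >= 0 -> (side x y p = 0 \/ side y z p = 0) -> False.
Proof.
  intros [_ [H2 H3]] h1 h2 [e|e].
  - specialize (H3 p e). rewrite side_self_l in H3.
    pose proof (pow2_ge_0 (dH y z)). nra.
  - specialize (H2 p e). rewrite side_self_r in H2.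
    pose proof (pow2_ge_0 (dH y x)). nra.
Qed.

Lemma cont_Qr a b u0 u1 v0 v1 :
  continuity (fun t => Qr a b ((1 - t) * u0 + t * u1) ((1 - t) * v0 + t * v1)).
Proof. unfold Qr. reg. Qed.

Lemma Rmin_abs a b : Rmin a b = (a + b - Rabs (a - b)) / 2.
Proof.
  unfold Rmin. destruct (Rle_dec a b).
  - rewrite Rabs_left1 by lra. field.
  - rewrite Rabs_right by lra. field.
Qed.

Lemma key x y z p : between x y z -> side x y p <= 0 -> side y z p >= 0 -> False.
Proof.
  intros Hb h1 h2.
  destruct (Req_dec (side x y p) 0) as [e|n1].
  { apply (boundary x y z p Hb h1 h2); auto. }
  destruct (Req_dec (side y z p) 0) as [e|n2].
  { apply (boundary x y z p Hb h1 h2); auto. }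
  assert (q1 : Q x y p < 0) by (apply Q_side; lra).
  assert (q2 : 0 < Q y z p) by (apply Q_side; lra).
  assert (q3 : 0 <= Q x y y).
  { destruct (Rlt_le_dec (Q x y y) 0) as [h|h]; [|exact h].
    apply side_Q in h. rewrite side_self_r in h. pose proof (pow2_ge_0 (dH y x)). lra. }
  destruct p as [[u0 v0] hv0] eqn:Ep. destruct y as [[u1 v1] hv1] eqn:Ey.
  set (phi := fun t => ((- Qr x (exist _ (u1,v1) hv1) ((1 - t) * u0 + t * u1) ((1 - t) * v0 + t * v1))
                   + (Qr (exist _ (u1,v1) hv1) z ((1 - t) * u0 + t * u1) ((1 - t) * v0 + t * v1))
                   - Rabs ((- Qr x (exist _ (u1,v1) hv1) ((1 - t) * u0 + t * u1) ((1 - t) * v0 + t * v1))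
                   - (Qr (exist _ (u1,v1) hv1) z ((1 - t) * u0 + t * u1) ((1 - t) * v0 + t * v1)))) / 2).
  assert (cphi : continuity phi).
  { unfold phi. intro t.
    set (f := fun t => - Qr x (exist _ (u1,v1) hv1) ((1 - t) * u0 + t * u1) ((1 - t) * v0 + t * v1)).
    set (g := fun t => Qr (exist _ (u1,v1) hv1) z ((1 - t) * u0 + t * u1) ((1 - t) * v0 + t * v1)).
    change (continuity_pt (fun t => (f t + g t - Rabs (f t - g t)) / 2) t).
    assert (cf : continuity f) by (unfold f; apply continuity_opp; apply cont_Qr).
    assert (cg : continuity g) by apply cont_Qr.
    assert (cab : continuity (fun t => Rabs (f t - g t))).
    { change (continuity (comp Rabs (fun t => f t - g t))). apply continuity_comp.
      apply continuity_minus; auto. apply Rcontinuity_abs. }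
    unfold Rdiv. apply continuity_pt_mult; [|apply continuity_pt_const; intros ? ?; auto].
    apply continuity_pt_minus; [apply continuity_pt_plus|]; auto. }
  assert (p0 : 0 < phi 0).
  { unfold phi; rewrite <- Rmin_abs. replace ((1-0)*u0 + 0*u1) with u0 by ring. replace ((1-0)*v0 + 0*v1) with v0 by ring.
    unfold Rmin. destruct (Rle_dec _ _); unfold Q in q1, q2; simpl in q1, q2; lra. }
  assert (p1 : phi 1 <= 0).
  { unfold phi; rewrite <- Rmin_abs. replace ((1-1)*u0 + 1*u1) with u1 by ring. replace ((1-1)*v0 + 1*v1) with v1 by ring.
    unfold Rmin. destruct (Rle_dec _ _); unfold Q in q3; simpl in q3; lra. }
  destruct (IVT_cor phi 0 1 cphi ltac:(lra) ltac:(nra)) as [t [[t0 t1] ht]].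
  assert (hv : 0 < snd ((1 - t) * u0 + t * u1, (1 - t) * v0 + t * v1)).
  { simpl in *. nra. }
  set (q := exist (fun p : R * R => 0 < snd p) _ hv).
  assert (A : Q x (exist _ (u1,v1) hv1) q <= 0 /\ Q (exist _ (u1,v1) hv1) z q >= 0 /\
             (Q x (exist _ (u1,v1) hv1) q = 0 \/ Q (exist _ (u1,v1) hv1) z q = 0)).
  { unfold Q, q; simpl. unfold phi in ht. rewrite <- Rmin_abs in ht. revert ht. unfold Rmin.
    destruct (Rle_dec _ _); intro; lra. }
  destruct A as [a1 [a2 a3]].
  pose proof (side_Q x (exist _ (u1,v1) hv1) q). pose proof (side_Q (exist _ (u1,v1) hv1) z q).
  destruct H as [c1 [c2 c3]]. destruct H0 as [d1 [d2 d3]].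
  apply (boundary x (exist _ (u1,v1) hv1) z q Hb).
  - destruct (Rle_lt_or_eq_dec _ _ a1) as [w|w]; [pose proof (c1 w)|pose proof (c2 w)]; lra.
  - destruct (Rle_lt_or_eq_dec 0 (Q (exist _ (u1,v1) hv1) z q)) as [w|w]; [lra|pose proof (d3 w)|pose proof (d2 (eq_sym w))]; lra.
  - destruct a3 as [w|w]; [left; apply c2 | right; apply d2]; exact w.
Qed.

Theorem mainTheorem5 (x y z : H2xH2) (k l : R) :
  betweenP x y z ->
  (exists p : H2xH2, E k x y p /\ E l y z p) ->
  k * l > 0.
Proof.
  intros [B1 B2] [[p1 p2] [[e1 e2] [e3 e4]]]. simpl in *.
  unfold S in *.
  pose proof (key _ _ _ p1 B1). pose proof (key _ _ _ p2 B2).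
  unfold side in *.
  destruct (Rtotal_order k 0) as [h|[h|h]]; destruct (Rtotal_order l 0) as [h'|[h'|h']];
  try nra; exfalso; first [apply H; lra | apply H0; lra].
Qed.
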